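(* Let $U$ be a finite ground set partitioned as $\mathcal{P}=\{U_1,\dots,U_N\}$ and let $\vec p,\vec q\in\mathbb{R}^N_{\ge0}$. For any positive integers $\kappa_1\le\kappa_2$, $$\mathcal{M}_{fair}(\mathcal{P},\kappa_1,\lceil\vec p\kappa_1\rceil,\lceil\vec q\kappa_1\rceil)\subseteq\mathcal{M}_{fair}(\mathcal{P},\kappa_2,\lfloor\vec p\kappa_2\rfloor,\lceil\vec q\kappa_2\rceil).$$
   Context: Fairness matroid: $\mathcal{M}_{fair}(\mathcal{P},\kappa,\vec l,\vec u)=\{S\subseteq U: |S\cap U_c|\le u_c\ \forall c\in[N],\ \sum_{c\in[N]}\max\{|S\cap U_c|,l_c\}\le\kappa\}$. For a vector $\vec v$ and scalar $k$, $\vec v k$ denotes componentwise scaling, and $\lceil\cdot\rceil$, $\lfloor\cdot\rfloor$ are applied componentwise. *)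

(* Defs.v *)
From HB Require Import structures.
From mathcomp Require Import all_boot all_order all_algebra.
From mathcomp Require Import reals.
Set Implicit Arguments. Unset Strict Implicit. Unset Printing Implicit Defensive.
Import Order.TTheory GRing.Theory Num.Theory.
Local Open Scope ring_scope.

(* The partition P = {U_1,...,U_N} of the finite ground set U is given by the
   map col : U -> 'I_N assigning each element to its block; U_c = block col c. *)
Definition block (U : finType) (N : nat) (col : U -> 'I_N) (c : 'I_N) : {set U} :=
  [set x | col x == c].

Definition Mfair (U : finType) (N : nat) (col : U -> 'I_N) (kappa : nat)
  (l u : 'I_N -> int) : {set {set U}} :=
  [set S : {set U} |
     [forall c : 'I_N, (#|S :&: block col c|%:Z <= u c)%R]
     && ((\sum_(c < N) Num.max (#|S :&: block col c|%:Z) (l c)) <= kappa%:Z)%R].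

Definition ceil_scale (R : realType) (N : nat) (v : 'I_N -> R) (k : nat) : 'I_N -> int :=
  fun c => Num.ceil (v c * k%:R).
Definition floor_scale (R : realType) (N : nat) (v : 'I_N -> R) (k : nat) : 'I_N -> int :=
  fun c => Num.floor (v c * k%:R).

(* Main.v *)
Require Import Defs.
From HB Require Import structures.
From mathcomp Require Import all_boot all_order all_algebra.
From mathcomp Require Import reals.
From mathcomp Require Import ring lra.
Import Order.TTheory GRing.Theory Num.Theory.
Local Open Scope ring_scope.

Theorem lemma5 (R : realType) (U : finType) (N : nat) (col : U -> 'I_N)
  (p q : 'I_N -> R) (hp : forall c, 0 <= p c) (hq : forall c, 0 <= q c)
  (k1 k2 : nat) (hk1 : (0 < k1)%N) (hk12 : (k1 <= k2)%N) :
  Mfair col k1 (ceil_scale p k1) (ceil_scale q k1)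
    \subset Mfair col k2 (floor_scale p k2) (ceil_scale q k2).
Proof.
apply/subsetP => S; rewrite !inE => /andP[/forallP Hu Hs]; apply/andP; split.
  apply/forallP => c; apply: le_trans (Hu c) _; apply: le_ceil.
  by rewrite ler_wpM2l // ler_nat.
set s := fun c : 'I_N => (#|S :&: block col c|%:Z).
have Hk : (k1%:R : R) <= k2%:R by rewrite ler_nat.
have Hk1 : (0 : R) < k1%:R by rewrite ltr0n.
have key c : ((Num.max (s c) (floor_scale p k2 c))%:~R : R)
    <= (Num.max (s c) (ceil_scale p k1 c))%:~R + p c * (k2%:R - k1%:R).
  have F := floor_le (p c * k2%:R).
  have C := ceil_ge (p c * k1%:R).
  have P := hp c.
  have E : p c * (k2%:R - k1%:R) = p c * k2%:R - p c * k1%:R by ring.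
  have D : 0 <= p c * (k2%:R - k1%:R) by apply: mulr_ge0 => //; lra.
  rewrite /floor_scale /ceil_scale -/(s c) !maxEle.
  case: ifP => h1; case: ifP => h2; move: h1 h2;
    rewrite -(ler_int R) -(ler_int R); lra.
have Hs' : (\sum_(c < N) (Num.max (s c) (ceil_scale p k1 c))%:~R : R) <= k1%:R.
  by rewrite -rmorph_sum /= -[k1%:R]/(k1%:Z%:~R) ler_int.
have Sp : \sum_(c < N) p c <= 1.
  have : (\sum_(c < N) p c) * k1%:R <= k1%:R.
    rewrite mulr_suml; apply: le_trans _ Hs'; apply: ler_sum => c _.
    apply: le_trans (ceil_ge _) _; rewrite ler_int; by rewrite le_max lexx orbT.
  by rewrite -ler_pdivlMr // divff ?gt_eqF.
rewrite -(ler_int R) rmorph_sum /=.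
apply: le_trans; first by apply: ler_sum => c _; exact: key c.
rewrite big_split /= -mulr_suml.
have : (\sum_i p i) * (k2%:R - k1%:R) <= k2%:R - k1%:R.
  by rewrite ler_piMl //; lra.
rewrite -[(k2%:Z)%:~R]/(k2%:R : R); lra.
Qed.
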